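(* If $G$ and $H$ are finite simple graphs without isolated vertices that are both total Roman graphs, then $$\gamma_{tR}(G\times H)\le \frac{\gamma_{tR}(G)\gamma_{tR}(H)}{2}.$$
   Context: $\gamma_t(G)$ is the minimum size of a set $D\subseteq V(G)$ such that every vertex of $G$ has a neighbor in $D$. A total Roman dominating function on $G$ is a map $f:V(G)\to\{0,1,2\}$ such that every vertex with label 0 has a neighbor with label 2 and the subgraph induced by vertices with positive labels has no isolated vertices; $\gamma_{tR}(G)$ is the minimum of $\sum_v f(v)$ over such $f$. $G$ is a total Roman graph if $\gamma_{tR}(G)=2\gamma_t(G)$. The direct product $G\times H$ has vertex set $V(G)\times V(H)$, with $(g,h)(g',h')$ an edge iff $gg'\in E(G)$ and $hh'\in E(H)$. *)

(* Defs.v *)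
From mathcomp Require Import all_boot.
Set Implicit Arguments. Unset Strict Implicit. Unset Printing Implicit Defensive.

Definition simple_graph (V : finType) (e : rel V) : Prop :=
  symmetric e /\ irreflexive e.

Definition no_isolated (V : finType) (e : rel V) : Prop :=
  forall v : V, exists u : V, e v u.

Definition total_dominating (V : finType) (e : rel V) (D : {set V}) : bool :=
  [forall v, exists u, (u \in D) && e v u].

(* gamma_t: minimum size of a total dominating set (default #|V| when none
   exists, which cannot happen without isolated vertices). *)
Definition gamma_t (V : finType) (e : rel V) : nat :=
  \big[minn/#|V|]_(D : {set V} | total_dominating e D) #|D|.

Definition total_roman (V : finType) (e : rel V) (f : {ffun V -> 'I_3}) : bool :=
  [forall v, (nat_of_ord (f v) == 0) ==> [exists u, e v u && (nat_of_ord (f u) == 2)]]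
  && [forall v, (0 < f v) ==> [exists u, e v u && (0 < f u)]].

Definition weight (V : finType) (f : {ffun V -> 'I_3}) : nat :=
  \sum_(v : V) nat_of_ord (f v).

(* gamma_tR: minimum weight of a TRDF (default 2 #|V|, the weight of the
   constant-2 function, which is a TRDF without isolated vertices). *)
Definition gamma_tR (V : finType) (e : rel V) : nat :=
  \big[minn/(2 * #|V|)%N]_(f : {ffun V -> 'I_3} | total_roman e f) weight f.

Definition total_roman_graph (V : finType) (e : rel V) : Prop :=
  gamma_tR e = (2 * gamma_t e)%N.

Definition direct_prod (V W : finType) (e1 : rel V) (e2 : rel W) : rel (V * W) :=
  fun x y => e1 x.1 y.1 && e2 x.2 y.2.

(* Main.v *)
Require Import Defs.
From mathcomp Require Import all_boot.

Lemma bigmin_le (I : eqType) (r : seq I) (P : pred I) (F : I -> nat) x0 j :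
  j \in r -> P j -> (\big[minn/x0]_(i <- r | P i) F i <= F j)%N.
Proof.
elim: r => // a r IH; rewrite inE big_cons => /orP [/eqP<- Pj|jr Pj].
  by rewrite Pj geq_minl.
case: ifP => _; last exact: IH.
exact: leq_trans (geq_minr _ _) (IH jr Pj).
Qed.

Lemma gamma_t_attained (V : finType) (e : rel V) :
  no_isolated e -> exists D, total_dominating e D /\ #|D| <= gamma_t e.
Proof.
move=> ni; rewrite /gamma_t.
apply: (big_ind (fun x => exists D, total_dominating e D /\ #|D| <= x)).
- exists setT; split; last by rewrite cardsT.
  apply/forallP => v; have [u hu] := ni v; apply/existsP; exists u.
  by rewrite in_setT hu.
- move=> x y [D [hD h1]] [D' [hD' h2]].
  case: (leqP x y) => hxy.
    by exists D; split => //; rewrite (minn_idPl hxy).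
  by exists D'; split => //; rewrite (minn_idPr (ltnW hxy)).
- by move=> D hD; exists D.
Qed.

Lemma gamma_tR_le (V : finType) (e : rel V) (D : {set V}) :
  total_dominating e D -> gamma_tR e <= 2 * #|D|.
Proof.
move=> hD.
pose f : {ffun V -> 'I_3} :=
  [ffun v => if v \in D then Ordinal (isT : 2 < 3) else Ordinal (isT : 0 < 3)].
have hf : total_roman e f.
  apply/andP; split; apply/forallP => v; apply/implyP.
    move=> _; have /existsP [u /andP [uD evu]] := (forallP hD) v.
    by apply/existsP; exists u; rewrite evu /f ffunE uD.
  move=> _; have /existsP [u /andP [uD evu]] := (forallP hD) v.
  by apply/existsP; exists u; rewrite evu /f ffunE uD.
have -> : 2 * #|D| = weight f.
  rewrite /weight (eq_bigr (fun v => if v \in D then 2 else 0)); last first.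
    by move=> v _; rewrite ffunE; case: ifP.
  by rewrite -big_mkcond /= sum_nat_const mulnC.
by rewrite /gamma_tR; apply: bigmin_le => //; rewrite mem_index_enum.
Qed.

Theorem corollary2p6 (V W : finType) (eG : rel V) (eH : rel W) :
  simple_graph eG -> simple_graph eH ->
  no_isolated eG -> no_isolated eH ->
  total_roman_graph eG -> total_roman_graph eH ->
  (2 * gamma_tR (direct_prod eG eH) <= gamma_tR eG * gamma_tR eH)%N.
Proof.
move=> _ _ niG niH -> ->.
have [D [hD cD]] := @gamma_t_attained _ _ niG.
have [D' [hD' cD']] := @gamma_t_attained _ _ niH.
have hX : total_dominating (direct_prod eG eH) (setX D D').
  apply/forallP => [[g h]].
  have /existsP [u /andP [uD eu]] := (forallP hD) g.
  have /existsP [u' /andP [uD' eu']] := (forallP hD') h.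
  apply/existsP; exists (u, u'); rewrite in_setX uD uD' /direct_prod /=.
  by rewrite eu eu'.
have := @gamma_tR_le _ _ _ hX; rewrite cardsX => h.
apply: leq_trans (leq_mul (leqnn 2) h) _.
rewrite -mulnA leq_mul2l /= (mulnCA (gamma_t eG)) leq_mul2l /=.
exact: leq_mul.
Qed.
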